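(* For every $\epsilon>0$ there exists $\delta>0$ such that, for $k<e^{\delta n}$ (where $n$ is the number of variables), no deterministic online width-cut-$k$ algorithm can achieve an asymptotic approximation ratio of $5/6+\epsilon$ for unweighted max-2-sat with input model 3.
   Context: Unweighted max-2-sat: the input is a CNF formula whose clauses have at most two literals, each of weight 1; the goal is an assignment maximizing the number of satisfied clauses. Online: variables arrive one at a time in adversarial order and each must be irrevocably assigned upon arrival. In input model 3, the data item of a variable contains the complete description of every clause in which it occurs (names, weights, lengths, and all the other variables in those clauses together with their signs), separated into clauses where it appears positively and negatively. Width-cut-$k$ model: the algorithm maintains a tree of partial assignments with the empty assignment as root at level 0; when the $i$-th variable is processed each node at level $i-1$ may get any number of children (including zero), each extending it by a value for that variable; at most $k$ nodes exist at each level; at the end the best complete assignment is output. The asymptotic approximation ratio of $\mathbb{A}$ is $\liminf_{n}\inf_{I\in\mathcal{I}_n} v(\mathbb{A},I)/v(I)$. *)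

(* Defs.v *)
From HB Require Import structures.
From mathcomp Require Import all_boot all_order all_algebra.
From mathcomp Require Import all_classical all_reals all_analysis.
Set Implicit Arguments. Unset Strict Implicit. Unset Printing Implicit Defensive.
Import Order.TTheory GRing.Theory Num.Theory.

(* A literal is (variable name, sign); sign = true means positive. *)
Definition literal := (nat * bool)%type.
(* A named clause: (clause name, list of literals).  All weights are 1. *)
Definition nclause := (nat * seq literal)%type.

(* An input instance: the variables in their (adversarial) arrival order,
   together with the named clauses of the formula. *)
Record instance := Instance { vars : seq nat; clauses : seq nclause }.

Definition clause_ok (V : seq nat) (c : seq literal) : bool :=
  [&& 0 < size c <= 2,
      all (fun l => l.1 \in V) c &
      uniq (map fst c)].

Definition wf (I : instance) : bool :=
  [&& uniq (vars I), uniq (map fst (clauses I)) &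
      all (fun c => clause_ok (vars I) c.2) (clauses I)].

Definition nvars (I : instance) : nat := size (vars I).

(* Input model 3 data item: the variable name, the clauses where it occurs
   positively and those where it occurs negatively (complete descriptions),
   listed in a canonical order (sorted by clause name). *)
Definition item := (nat * seq nclause * seq nclause)%type.

Definition by_name (c d : nclause) : bool := (c.1 <= d.1)%N.

Definition data_item (I : instance) (x : nat) : item :=
  (x, sort by_name [seq c <- clauses I | (x, true) \in c.2],
      sort by_name [seq c <- clauses I | (x, false) \in c.2]).

Definition items (I : instance) : seq item := map (data_item I) (vars I).

(* Satisfaction by an assignment a : seq bool, where a`_j is the value of
   the j-th arriving variable. *)
Definition val (I : instance) (a : seq bool) (x : nat) : bool :=
  nth false a (index x (vars I)).

Definition sat_clause (I : instance) (a : seq bool) (c : seq literal) : bool :=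
  has (fun l => val I a l.1 == l.2) c.

Definition nsat (I : instance) (a : seq bool) : nat :=
  count (fun c => sat_clause I a c.2) (clauses I).

Definition opt (I : instance) : nat :=
  \max_(t : (nvars I).-tuple bool) nsat I t.

(* A deterministic online width-cut algorithm: [A n hist node b] decides,
   when the i-th variable is processed (hist = the i data items seen so far,
   the current one last; n = the number of variables), whether the node
   [node] (a partial assignment at level i-1) gets a child extending it by
   value b. *)
Definition alg := nat -> seq item -> seq bool -> bool -> bool.

Fixpoint level (A : alg) (n : nat) (its : seq item) (i : nat) : seq (seq bool) :=
  match i with
  | 0 => [:: [::]]
  | i'.+1 =>
      flatten [seq [seq rcons a b | b <- [:: false; true] & A n (take i'.+1 its) a b]
              | a <- level A n its i']
  end.

Definition width_cut (A : alg) (k : nat -> nat) : Prop :=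
  forall I, wf I -> forall i, (i <= nvars I)%N ->
    (size (level A (nvars I) (items I) i) <= k (nvars I))%N.

(* v(A, I): best complete assignment in the tree (0 if there is none). *)
Definition algval (A : alg) (I : instance) : nat :=
  \max_(a <- level A (nvars I) (items I) (nvars I)) nsat I a.

Local Open Scope ring_scope.
Local Open Scope classical_set_scope.

(* v(A,I)/v(I), with the convention 1 when v(I) = 0 (formula with no clauses). *)
Definition ratio (R : realType) (A : alg) (I : instance) : R :=
  if opt I == 0%N then 1 else (algval A I)%:R / (opt I)%:R.

Definition worst_ratio (R : realType) (A : alg) (n : nat) : R :=
  inf [set ratio R A I | I in [set I | wf I /\ nvars I = n]].

Definition asym_ratio (R : realType) (A : alg) : R :=
  limn_inf (fun n => worst_ratio R A n).

(* Main.v *)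
Require Import Defs.
From HB Require Import structures.
From mathcomp Require Import all_boot all_order all_algebra.
From mathcomp Require Import all_classical all_reals all_analysis.
From mathcomp Require Import zify ring lra.
From Stdlib Require Import Lia.
Import Order.TTheory GRing.Theory Num.Theory.


Lemma level_take (A : alg) n its its' i :
  take i its = take i its' -> level A n its i = level A n its' i.
Proof.
elim: i => [//|i IH] /= E.
have E' : take i its = take i its'.
  have := congr1 (take i) E; rewrite !take_takel //.
rewrite (IH E') E //.
Qed.

Lemma level_size {A : alg} {n its i a} : a \in level A n its i -> size a = i.
Proof.
elim: i a => [|i IH] a /=; first by rewrite inE => /eqP ->.
move=> /flattenP [s /mapP [a' a'in ->]] /mapP [b _ ->].
by rewrite size_rcons (IH _ a'in).
Qed.

Lemma level_prefix (A : alg) n its i i' a :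
  (i <= i')%N -> a \in level A n its i' -> take i a \in level A n its i.
Proof.
elim: i' a => [|i' IH] a.
  rewrite leqn0 => /eqP -> Ha; have Hs := level_size Ha.
  by rewrite take_oversize ?Hs.
rewrite leq_eqVlt => /orP [/eqP -> Ha|]; first by rewrite take_oversize ?(level_size Ha).
rewrite ltnS => lei /=.
move=> /flattenP [s /mapP [a' a'in ->]] /mapP [b _ ->].
rewrite -cats1 take_cat (level_size a'in).
case: ltngtP lei => // [lt _|-> _].
  by apply: IH => //; apply: ltnW.
by rewrite subnn take0 cats0.
Qed.


Definition gadget (m : nat) (p : bool) (i : nat) : seq nclause :=
  [:: (3 * i, [:: (i,true); (m+i,true)]);
      (3 * i+1, [:: (i,false); (2 * m+i,true)]);
      (3 * i+2, if p then [:: (2 * m+i,false)] else [:: (m+i,false)])].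
Definition cls m (pi : seq bool) :=
  flatten [seq gadget m (nth false pi i) i | i <- iota 0 m].
Definition inst m pi := Instance (iota 0 (3 * m)) (cls m pi).

Lemma names_cls m pi s r :
  map fst (flatten [seq gadget m (nth false pi i) i | i <- iota s r]) = iota (3 * s) (3 * r).
Proof.
elim: r s => [|r IH] s; first by rewrite muln0.
rewrite (_ : flatten _ = gadget m (nth false pi s) s ++
   flatten [seq gadget m (nth false pi i) i | i <- iota s.+1 r]) // map_cat IH.
have -> : (3 * r.+1 = 3 + 3 * r)%N by lia.
rewrite iotaD; congr (_ ++ _); last by congr iota; lia.
by rewrite /= addn1 addn2.
Qed.

Lemma nvars_inst m pi : nvars (inst m pi) = (3 * m)%N.
Proof. by rewrite /nvars size_iota. Qed.

Lemma wf_inst m pi : wf (inst m pi).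
Proof.
apply/and3P; split; first exact: iota_uniq.
  by rewrite /= /cls names_cls iota_uniq.
apply/allP => c /flattenP [g /mapP [i]]; rewrite mem_iota add0n => /andP [_ im] -> /=.
have h1 : (i < 3 * m)%N by lia.
have h2 : (m + i < 3 * m)%N by lia.
have h3 : (2 * m + i < 3 * m)%N by lia.
have n1 : (i != m + i)%N by rewrite eq_sym -{2}(add0n i) eqn_add2r; lia.
have n2 : (i != 2 * m + i)%N by rewrite eq_sym -{2}(add0n i) eqn_add2r; lia.
rewrite !inE => /orP [/eqP ->|/orP [/eqP ->|/eqP ->]]; rewrite /clause_ok /=.
- by rewrite !mem_iota /= h1 h2 inE n1.
- by rewrite !mem_iota /= h1 h3 inE n2.
by case: (nth false pi i); rewrite /= mem_iota /= ?h2 ?h3.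
Qed.

Lemma filter_gadget m p p' i j b : (j < m)%N ->
  [seq c <- gadget m p i | (j, b) \in c.2] = [seq c <- gadget m p' i | (j, b) \in c.2].
Proof.
move=> jm.
have H : forall q, ((j, b) \in (if q then [:: (2 * m + i, false)] else [:: (m + i, false)])) = false.
  move=> q; case: q; rewrite inE xpair_eqE; apply/negbTE/nandP; left; lia.
by rewrite /= !H.
Qed.

Lemma take_items m pi pi' :
  take m (items (inst m pi)) = take m (items (inst m pi')).
Proof.
rewrite /items -!map_take /= take_iota.
apply/eq_in_map => j; rewrite mem_iota add0n => jm.
have jm' : (j < m)%N by move: jm; rewrite /minn; case: ifP => //; lia.
rewrite /data_item /= /cls !filter_flatten -!map_comp.
congr (_, sort _ (flatten _), sort _ (flatten _)); apply/eq_map => i /=; exact: filter_gadget.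
Qed.

Lemma index_iota0 n x : (x < n)%N -> index x (iota 0 n) = x.
Proof.
move=> xn; have := nth_iota 0 0 xn; rewrite add0n => {1}<-; rewrite index_uniq ?iota_uniq ?size_iota //.
Qed.

Lemma valE m pi a x : (x < 3 * m)%N -> Defs.val (inst m pi) a x = nth false a x.
Proof. by move=> h; rewrite /Defs.val /= index_iota0. Qed.

Definition agr m (a pi : seq bool) :=
  count (fun i => nth false a i == nth false pi i) (iota 0 m).

Lemma count_flat_bound (P : pred nclause) (Q : pred nat) (g : nat -> seq nclause) s :
  (forall i, i \in s -> count P (g i) + Q i <= 3)%N ->
  (count P (flatten (map g s)) + count Q s <= 3 * size s)%N.
Proof.
elim: s => [//|i s IH] H /=.
rewrite count_cat.
have h1 := H i (mem_head _ _).
have h2 : (count P (flatten [seq g i | i <- s]) + count Q s <= 3 * size s)%N.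
  by apply: IH => j js; apply: H; rewrite inE js orbT.
move: h1 h2; set x := count P (g i); set y := count P _; set z := count Q s; set w := size s.
case: (Q i) => /=; lia.
Qed.

Lemma nsat_bound m pi a : (nsat (inst m pi) a + agr m a pi <= 3 * m)%N.
Proof.
rewrite /nsat /agr /= /cls.
have := @count_flat_bound (fun c => sat_clause (inst m pi) a c.2)
  (fun i => nth false a i == nth false pi i)
  (fun i => gadget m (nth false pi i) i) (iota 0 m).
rewrite size_iota; apply => i; rewrite mem_iota add0n => im.
have h1 : (i < 3 * m)%N by lia.
have h2 : (m + i < 3 * m)%N by lia.
have h3 : (2 * m + i < 3 * m)%N by lia.
rewrite /= /sat_clause /= !valE //.
case: (nth false pi i); rewrite /= !valE //;
  case: (nth false a i); case: (nth false a (m + i)); case: (nth false a (2 * m + i)) => //.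
Qed.

Definition optf m (pi : seq bool) (x : nat) : bool :=
  if (x < m)%N then ~~ nth false pi x
  else if (x < 2 * m)%N then nth false pi (x - m) else ~~ nth false pi (x - 2 * m).

Lemma size_cls m pi : size (cls m pi) = (3 * m)%N.
Proof. by rewrite -(size_map fst) /cls names_cls size_iota. Qed.

Lemma opt_ge m pi : (3 * m <= opt (inst m pi))%N.
Proof.
have sz : size (mkseq (optf m pi) (nvars (inst m pi))) == nvars (inst m pi).
  by rewrite size_mkseq.
apply: (leq_trans _ (leq_bigmax (Tuple sz))).
rewrite /nsat /= -{1}(size_cls m pi) -count_predT.
apply/eq_leq/eq_in_count => c /flattenP [g /mapP [i]]; rewrite mem_iota add0n leq0n /= => im -> /=.
have h1 : (i < 3 * m)%N by lia.
have h2 : (m + i < 3 * m)%N by lia.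
have h3 : (2 * m + i < 3 * m)%N by lia.
have e1 : Defs.val (inst m pi) (mkseq (optf m pi) (nvars (inst m pi))) i = ~~ nth false pi i.
  by rewrite valE // nth_mkseq ?nvars_inst // /optf im.
have e2 : Defs.val (inst m pi) (mkseq (optf m pi) (nvars (inst m pi))) (m + i) = nth false pi i.
  rewrite valE // nth_mkseq ?nvars_inst // /optf.
  have -> : (m + i < m)%N = false by lia.
  have -> : (m + i < 2 * m)%N = true by lia.
  by rewrite addKn.
have e3 : Defs.val (inst m pi) (mkseq (optf m pi) (nvars (inst m pi))) (2 * m + i) = ~~ nth false pi i.
  rewrite valE // nth_mkseq ?nvars_inst // /optf.
  have -> : (2 * m + i < m)%N = false by lia.
  have -> : (2 * m + i < 2 * m)%N = false by lia.
  by rewrite addKn.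
rewrite !inE => /orP [/eqP ->|/orP [/eqP ->|/eqP ->]]; rewrite /sat_clause /= ?e1 ?e2 ?e3;
  case E: (nth false pi i) => //=; by rewrite ?e1 ?e2 ?e3 ?E.
Qed.

Section RealPart.
Local Open Scope ring_scope.



Fixpoint allseq (m : nat) : seq (seq bool) :=
  if m is m'.+1 then [seq b :: s | b <- [:: false; true], s <- allseq m'] else [:: [::]].

Lemma size_allseq m : size (allseq m) = (2 ^ m)%N.
Proof. by elim: m => [//|m IH]; rewrite (size_allpairs (fun b s => b :: s)) IH expnS. Qed.

Lemma allseq_size m pi : pi \in allseq m -> size pi = m.
Proof.
elim: m pi => [|m IH] pi; first by rewrite inE => /eqP ->.
by case/allpairsP => [[b s] [_ /= /IH <- ->]].
Qed.

Lemma agrS m p b s : agr m.+1 p (b :: s) = ((nth false p 0 == b) + agr m (behead p) s)%N.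
Proof.
rewrite /agr /= -(addn0 1%N) iotaDl count_map; congr (_ + _)%N.
by apply: eq_count => i /=; rewrite nth_behead add1n.
Qed.


Lemma sum_allseq (R : realType) (t : R) m p :
  \sum_(pi <- allseq m) t ^+ agr m p pi = (1 + t) ^+ m.
Proof.
elim: m p => [|m IH] p; first by rewrite /= big_cons big_nil /agr /= addr0 expr0.
have -> : allseq m.+1 = [seq b :: s | b <- [:: false; true], s <- allseq m] by [].
rewrite big_allpairs_dep !big_cons big_nil.
change (\sum_(s <- allseq m) t ^+ agr m.+1 p (false :: s) +
  (\sum_(s <- allseq m) t ^+ agr m.+1 p (true :: s) + 0) = (1 + t) ^+ m.+1).
rewrite addr0.
under eq_bigr do rewrite agrS exprD.
under [X in _ + X = _]eq_bigr do rewrite agrS exprD.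
rewrite -!big_distrr /= !IH exprS -mulrDl; congr (_ * _).
by case: (nth false p 0); rewrite /= ?expr0 ?expr1 // addrC.
Qed.

Lemma sum_ge_one (R : realType) (S : seq (seq bool)) (f : seq bool -> R) p :
  (forall q, 0 <= f q) -> p \in S -> f p <= \sum_(q <- S) f q.
Proof.
move=> f0; elim: S => [//|q S IH]; rewrite inE big_cons => /orP [/eqP ->|/IH h].
  by rewrite lerDl sumr_ge0.
by apply: le_trans h _; rewrite lerDr.
Qed.

Lemma exists_pi (R : realType) m (S : seq (seq bool)) (t : R) j :
  0 < t -> t <= 1 -> (size S)%:R * (1 + t) ^+ m < 2 ^+ m * t ^+ j ->
  exists pi, size pi = m /\ forall p, p \in S -> (j < agr m p pi)%N.
Proof.
move=> t0 t1 H.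
case: (boolP (all (fun pi => has (fun p => agr m p pi <= j)%N S) (allseq m))) => [Hall|].
  exfalso; move: H; apply/negP; rewrite -leNgt.
  have -> : (size S)%:R * (1 + t) ^+ m =
      \sum_(pi <- allseq m) \sum_(p <- S) t ^+ agr m p pi.
    rewrite exchange_big /=.
    under eq_bigr do rewrite sum_allseq.
    rewrite big_const_seq count_predT.
    by rewrite iter_addr_0 mulr_natl.
  have -> : 2 ^+ m * t ^+ j = \sum_(pi <- allseq m) t ^+ j.
    by rewrite big_const_seq count_predT size_allseq iter_addr_0 -[t ^+ j *+ _]mulr_natr natrX mulrC.
  rewrite big_seq [X in _ <= X]big_seq; apply: ler_sum => pi pin.
  have /hasP [p pS pj] := allP Hall pi pin.
  apply: le_trans (@sum_ge_one R S (fun q => t ^+ agr m q pi) p _ pS).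
    by apply: ler_wiXn2l => //; apply: ltW.
  by move=> q; apply: exprn_ge0; apply: ltW.
case/allPn => pi pin /hasPn Hp; exists pi; split; first exact: allseq_size.
by move=> p /Hp; rewrite ltnNge.
Qed.


Lemma expR_le_quad (R : realType) (x : R) : x <= 1/2 -> -1 <= x -> expR x <= 1 + x + 2 * x ^+ 2.
Proof.
move=> x1 x2.
have h := expR_ge1Dx (- x).
have hp : 0 < 1 - x by lra.
have e : expR x = (expR (- x))^-1 by rewrite expRN invrK.
rewrite e.
have hq : 0 < 1 + - x by lra.
apply: (le_trans (y := (1 - x)^-1)).
  by rewrite lef_pV2 ?posrE ?expR_gt0 //.
rewrite -(ler_pM2l hp) mulfV ?gt_eqF //.
have : 0 <= x ^+ 2 * (1 - 2 * x) by apply: mulr_ge0; [exact: sqr_ge0| lra].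
rewrite expr2; nra.
Qed.

Lemma expR_mul_le1 (R : realType) (d : R) : expR d * (1 - d) <= 1.
Proof.
have h := expR_ge1Dx (- d).
have e : expR d * expR (- d) = 1 by rewrite expRN mulfV // gt_eqF // expR_gt0.
rewrite -e; apply: ler_wpM2l; [exact/ltW/expR_gt0 | lra].
Qed.

Lemma param_ineq (R : realType) (g : R) : 0 < g -> g <= 1/2 ->
  expR (3 * (g ^+ 2 / 24)) * (expR (g / 4 * (1/2 - g)) + expR (- (g / 4 * (1 - (1/2 - g))))) <= 2.
Proof.
move=> g0 g1.
set a := g / 4 * (1/2 - g); set b := - (g / 4 * (1 - (1/2 - g))).
have ha := (@expR_le_quad R a ltac:(rewrite /a; nra) ltac:(rewrite /a; nra)).
have hb := (@expR_le_quad R b ltac:(rewrite /b; nra) ltac:(rewrite /b; nra)).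
have hs : expR a + expR b <= 2 * (1 - 3 * (g ^+ 2 / 24)).
  have hh : 0 <= g * g * (3/4 - g * g) by apply: mulr_ge0; nra.
  apply: (le_trans (lerD ha hb)); rewrite /a /b !expr2; nra.
have hd := @expR_mul_le1 R (3 * (g ^+ 2 / 24)).
have hd0 : 0 < 1 - 3 * (g ^+ 2 / 24) by rewrite expr2; nra.
have E0 := expR_gt0 (3 * (g ^+ 2 / 24)).
have : expR (3 * (g ^+ 2 / 24)) * (expR a + expR b) <=
       expR (3 * (g ^+ 2 / 24)) * (2 * (1 - 3 * (g ^+ 2 / 24))).
  by apply: ler_wpM2l => //; apply: ltW.
move=> h; apply: (le_trans h); nra.
Qed.

Local Open Scope classical_set_scope.


Lemma liminf_le (R : realType) (u : nat -> R) (l : R) :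
  (forall n, 0 <= u n <= 1) -> (forall N, exists2 n, (N <= n)%N & u n <= l) ->
  limn_inf u <= l.
Proof.
move=> ub fr.
have bu : bounded_fun u.
  rewrite /bounded_near; near=> M => n _ /=.
  have /andP[h0 h1] := ub n.
  rewrite ger0_norm //; apply: le_trans h1 _.
  by near: M; exact: nbhs_pinfty_ge.
rewrite limn_infE //; apply: ge_sup; first by exists (infs u 0), 0%N.
move=> _ [N _ <-]; have [n Nn unl] := fr N.
apply: le_trans unl; apply: ge_inf; last by exists n.
exact/has_lbound_sdrop/bounded_fun_has_lbound.
Unshelve. all: end_near. Qed.

End RealPart.

Section Helpers2.
Local Open Scope ring_scope.
Local Open Scope classical_set_scope.

Lemma ratio_ge0 (R : realType) A I : 0 <= Defs.ratio R A I.
Proof. by rewrite /Defs.ratio; case: ifP => // _; apply: divr_ge0. Qed.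

Lemma worst_ratio_bounds (R : realType) A n : 0 <= worst_ratio R A n <= 1.
Proof.
pose triv := Instance (iota 0 n) [::].
have wt : wf triv by rewrite /wf /= iota_uniq.
have nt : nvars triv = n by rewrite /nvars size_iota.
have rt : Defs.ratio R A triv = 1.
  have ot : opt triv = 0%N by rewrite /opt big1.
  by rewrite /Defs.ratio ot eqxx.
have E1 : [set Defs.ratio R A I | I in [set I | wf I /\ nvars I = n]] 1.
  by exists triv.
have lb : lbound [set Defs.ratio R A I | I in [set I | wf I /\ nvars I = n]] 0.
  by move=> _ [I _ <-]; exact: ratio_ge0.
apply/andP; split.
  by apply: lb_le_inf => //; exists 1.
by apply: ge_inf => //; exists 0.
Qed.

Lemma agr_take m a pi : agr m (take m a) pi = agr m a pi.
Proof.
apply: eq_in_count => i; rewrite mem_iota add0n leq0n /= => im.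
by rewrite nth_take.
Qed.

Lemma construct (R : realType) (A : alg) (k : nat -> nat) (g : R) m :
  0 < g -> g <= 1/2 -> (0 < m)%N -> width_cut A k ->
  (k (3 * m)%N)%:R < expR (g ^+ 2 / 24 * (3 * m)%N%:R) ->
  worst_ratio R A (3 * m) <= 5%:R / 6%:R + g / 3.
Proof.
move=> g0 g1 m0 wc hk.
set al := 1/2 - g.
set la := g / 4.
set de := g ^+ 2 / 24.
set t := expR (- la).
have t0 : 0 < t by apply: expR_gt0.
have t1 : t <= 1 by rewrite /t -expR0 ler_expR /la; lra.
have alm0 : 0 <= al * m%:R by apply: mulr_ge0; rewrite /al ?ler0n //; lra.
set j0 := Num.truncn (al * m%:R).
have /andP [hj1 hj2] := truncn_itv alm0.
pose pi0 := nseq m false.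
set S := level A (3 * m) (items (inst m pi0)) m.
have hS : (size S <= k (3 * m))%N.
  have := wc (inst m pi0) (wf_inst m pi0) m; rewrite nvars_inst; apply; lia.
have hineq : (size S)%:R * (1 + t) ^+ m < 2 ^+ m * t ^+ j0.
  have p1 : 0 < (1 + t) ^+ m by apply: exprn_gt0; lra.
  apply: (@lt_le_trans _ _ (expR (3 * de) ^+ m * (1 + t) ^+ m)).
    rewrite ltr_pM2r //; apply: le_lt_trans (_ : (k (3 * m)%N)%:R < _).
      by rewrite ler_nat.
    rewrite -expRM_natr.
    have -> : 3 * de * m%:R = de * (3 * m)%N%:R by rewrite natrM; ring.
    exact: hk.
  rewrite -exprMn.
  apply: (@le_trans _ _ ((2 * expR (- (la * al))) ^+ m)).
    apply: lerXn2r; rewrite ?posrE ?nnegrE.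
    - by apply: mulr_ge0; [apply/ltW/expR_gt0| lra].
    - by apply: mulr_ge0; [lra| apply/ltW/expR_gt0].
    have P := @param_ineq R g g0 g1.
    have ep : 0 < expR (la * al) by apply: expR_gt0.
    have ep' : expR (- (la * al)) * expR (la * al) = 1 by rewrite -expRD addNr expR0.
    have eZ : t * expR (la * al) = expR (- (g / 4 * (1 - (1 / 2 - g)))).
      rewrite /t -expRD; congr expR; rewrite /la /al; ring.
    rewrite -(ler_pM2r ep).
    rewrite -[X in _ <= X]mulrA ep' mulr1 -mulrA [(1 + t) * _]mulrDl mul1r eZ.
    exact: P.
  rewrite exprMn ler_pM2l; last by apply: exprn_gt0.
  rewrite -expRM_natr /t -expRM_natr ler_expR.
  have la0 : 0 <= la by rewrite /la; lra.
  have h := ler_wpM2l la0 hj1.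
  nra.
have [pi [szpi Hpi]] := @exists_pi R m S t j0 t0 t1 hineq.
set I := inst m pi.
have SI : S = level A (3 * m) (items I) m.
  by apply: level_take; apply: take_items.
have hopt : (3 * m <= opt I)%N := opt_ge m pi.
have j0m : (j0 < m)%N.
  have m0' : 0 < m%:R :> R by rewrite ltr0n.
  have : j0%:R < m%:R :> R by rewrite /al in hj1; nra.
  by rewrite ltr_nat.
have halg : (algval A I + j0.+1 <= 3 * m)%N.
  have : (algval A I <= 3 * m - j0.+1)%N.
    rewrite /algval nvars_inst.
    apply/bigmax_leqP_seq => a ain _.
    have tin : take m a \in S by rewrite SI; apply: level_prefix ain; lia.
    have := Hpi _ tin; rewrite agr_take => hj.
    have := nsat_bound m pi a; rewrite -/I; lia.
  lia.
apply: (@le_trans _ _ (Defs.ratio R A I)).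
  apply: ge_inf.
    by exists 0 => _ [J _ <-]; exact: ratio_ge0.
  by exists I => //; split; [exact: wf_inst | exact: nvars_inst].
rewrite /Defs.ratio.
have -> : (opt I == 0)%N = false by apply/negbTE; rewrite -lt0n; lia.
rewrite ler_pdivrMr; last by rewrite ltr0n; lia.
have c1 : (algval A I)%:R + (j0.+1)%:R <= (3 * m)%N%:R :> R by rewrite -natrD ler_nat.
have c2 : (3 * m)%N%:R <= (opt I)%:R :> R by rewrite ler_nat.
rewrite natrM in c1 c2.
have gp : 0 <= 5%:R / 6%:R + g / 3 :> R by lra.
have c3 := ler_wpM2l gp c2.
rewrite /al in hj2.
nra.
Qed.

End Helpers2.

Local Open Scope ring_scope.

Theorem theorem4 (R : realType) (eps : R) :
  0 < eps ->
  exists2 delta : R, 0 < delta &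
    forall (A : alg) (k : nat -> nat),
      (exists N : nat, forall n : nat, (N <= n)%N ->
          (k n)%:R < expR (delta * n%:R)) ->
      width_cut A k ->
      asym_ratio R A < 5%:R / 6%:R + eps.
Proof.
move=> eps0.
pose g := Num.min eps (1/2).
have ge : g <= eps by rewrite /g ge_min lexx.
have g1 : g <= 1/2 by rewrite /g ge_min lexx orbT.
have g0 : 0 < g by rewrite /g lt_min eps0 /=; lra.
exists (g ^+ 2 / 24); first by apply: divr_gt0 => //; apply: exprn_gt0.
move=> A k [N hk] wc.
apply: (@le_lt_trans _ _ (5%:R / 6%:R + g / 3)); last by lra.
apply: liminf_le; first by move=> n; apply: worst_ratio_bounds.
move=> N0; exists (3 * (N0 + N + 1))%N; first lia.
apply: (@construct R A k g) => //; first lia.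
apply: hk; lia.
Qed.
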